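(* Let $X_1,\ldots,X_n$ be independent real random variables, let $\sigma>0$ and $w>0$, and assume that each $X_i/\sigma$ has a continuous density bounded above by $w$. Let $S=\sum_{i=1}^nX_i^2$. Then for every $x>0$, $$\mathbb{P}(S\leq\sigma^2x)\leq\exp\Big[\frac n2\Big\{1+\log(2\pi w^2)-\log\Big(\frac nx\Big)\Big\}\Big].$$ *)

(* Defs.v *)
From HB Require Import structures.
From mathcomp Require Import all_boot all_order all_algebra.
From mathcomp Require Import all_classical all_reals all_analysis.
Set Implicit Arguments. Unset Strict Implicit. Unset Printing Implicit Defensive.
Import Order.TTheory GRing.Theory Num.Theory.
Import numFieldNormedType.Exports.
Local Open Scope classical_set_scope.
Local Open Scope ring_scope.

(* Taking
   B i = setT for the unused indices, this covers all subfamilies. *)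
Definition mutually_independent d (T : measurableType d) (R : realType)
  (P : probability T R) (n : nat) (X : 'I_n -> T -> R) : Prop :=
  forall B : 'I_n -> set R, (forall i, measurable (B i)) ->
    P (\bigcap_(i in [set: 'I_n]) (X i @^-1` B i)) =
    (\prod_(i < n) P (X i @^-1` B i))%E.

Definition has_cont_density_bounded_by d (T : measurableType d)
  (R : realType) (P : probability T R) (Y : T -> R) (w : R) : Prop :=
  exists f : R -> R,
    continuous f /\ (forall x, 0 <= f x <= w) /\
    forall B : set R, measurable B ->
      P (Y @^-1` B) = (\int[@lebesgue_measure R]_(x in B) (f x)%:E)%E.

(* Main.v *)
Require Import Defs.
From HB Require Import structures.
From mathcomp Require Import all_boot all_order all_algebra.
From mathcomp Require Import all_classical all_reals all_analysis.
From mathcomp Require Import ring lra measurable_realfun.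
Import Order.TTheory GRing.Theory Num.Theory.
Import numFieldNormedType.Exports.
Local Open Scope classical_set_scope.
Local Open Scope ring_scope.

Section helpers.
Context {R : realType}.

Definition bucket (δ : R) (j : nat) : set R :=
  (fun y : R => y ^+ 2) @^-1` `[j%:R * δ, j.+1%:R * δ[%classic.

Lemma bucketE δ j y : bucket δ j y <-> (j%:R * δ <= y ^+ 2 < j.+1%:R * δ).
Proof. by rewrite /bucket /preimage /= in_itv. Qed.

Lemma measurable_bucket_comp dT (T : measurableType dT) (g : T -> R) δ j :
  measurable_fun setT g -> measurable (g @^-1` bucket δ j).
Proof.
move=> mg.
have mh : measurable_fun setT (fun y => g y ^+ 2) by exact: measurable_funX.
have := mh measurableT _ (measurable_itv `[j%:R * δ, j.+1%:R * δ[).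
by rewrite setTI.
Qed.

Lemma measurable_bucket δ j : measurable (bucket δ j).
Proof. exact: (@measurable_bucket_comp _ _ id). Qed.

Lemma bucket_uniq δ i j y : 0 < δ -> bucket δ i y -> bucket δ j y -> i = j.
Proof.
move=> d0 /bucketE /andP[h1 h2] /bucketE /andP[h3 h4].
have a : (i <= j)%N.
  have := le_lt_trans h1 h4; rewrite ltr_pM2r // ltr_nat ltnS; exact.
have b : (j <= i)%N.
  have := le_lt_trans h3 h2; rewrite ltr_pM2r // ltr_nat ltnS; exact.
by apply/eqP; rewrite eqn_leq a b.
Qed.

Lemma bucket_truncn δ y : 0 < δ -> bucket δ (Num.truncn (y ^+ 2 / δ)) y.
Proof.
move=> d0; apply/bucketE.
have /andP[h1 h2] := truncn_itv (divr_ge0 (sqr_ge0 y) (ltW d0)).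
by rewrite -ler_pdivlMr // ltr_pdivrMr // in h1 h2 *; rewrite h1 h2.
Qed.


Lemma normal_fun_integral (s : R) : 0 < s ->
  (\int[@lebesgue_measure R]_y (normal_fun 0 s y)%:E = ((normal_peak s)^-1)%:E)%E.
Proof.
move=> s0.
have := integral_normal_pdf 0 s; rewrite normal_pdfE ?gt_eqF //.
under eq_integral do rewrite EFinM.
rewrite ge0_integralZl_EFin //; last 3 first.
- by move=> y _; rewrite lee_fin normal_fun_ge0.
- by apply/measurable_EFinP; exact: measurable_normal_fun.
- exact: normal_peak_ge0.
set I := (\int[_]_y _)%E => H.
have p0 : normal_peak s != 0 by rewrite gt_eqF // normal_peak_gt0 // gt_eqF.
rewrite -[I]mul1e -(mulVf p0) EFinM -muleA H mule1 //.
Qed.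

Lemma density_sum (f : R -> R) (w s δ : R) (K : nat) :
  continuous f -> (forall x, 0 <= f x <= w) -> 0 < s -> 0 < δ ->
  (\sum_(j < K) (expR (- (j%:R * δ) / (s ^+ 2 *+ 2)))%:E *
      \int[@lebesgue_measure R]_(y in bucket δ j) (f y)%:E
   <= (expR (δ / (s ^+ 2 *+ 2)) * w * (normal_peak s)^-1)%:E)%E.
Proof.
move=> cf f0w s0 d0.
set D := s ^+ 2 *+ 2.
have D0 : 0 < D by rewrite pmulrn_lgt0 // exprn_gt0.
have mf : measurable_fun setT f := continuous_measurable_fun cf.
set g := fun y => expR (δ / D) * w * normal_fun 0 s y.
have w0 : 0 <= w by case/andP: (f0w 0) => /le_trans; apply.
have mg : measurable_fun setT g.
  by apply: measurable_funM => //; exact: measurable_normal_fun.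
have g0 y : 0 <= g y by rewrite mulr_ge0 ?mulr_ge0 ?expR_ge0 ?normal_fun_ge0.
apply: (@le_trans _ _ (\sum_(j < K) \int[@lebesgue_measure R]_(y in bucket δ j) (g y)%:E)%E).
  apply: lee_sum => j _.
  have f0' : forall y, bucket δ j y -> (0 <= (f y)%:E)%E.
    by move=> y _; rewrite lee_fin; case/andP: (f0w y).
  have mf' : measurable_fun (bucket δ j) (fun y => (f y)%:E).
    exact/measurable_EFinP/measurable_funTS.
  have HZ := ge0_integralZl_EFin (@lebesgue_measure R) (measurable_bucket δ j) f0' mf'
     (expR_ge0 (- (j%:R * δ) / D)).
  cbv beta in HZ; rewrite -HZ.
  apply: ge0_le_integral => //.
  - exact: measurable_bucket.
  - by move=> y _; rewrite lee_fin mulr_ge0 ?expR_ge0 //; case/andP: (f0w y).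
  - rewrite (_ : (fun x => _) = EFin \o (fun x => expR (- (j%:R * δ) / D) * f x)).
      exact/measurable_EFinP/measurable_funTS/measurable_funM.
    by apply/funext => y.
  - exact/measurable_EFinP/measurable_funTS.
  move=> y /bucketE /andP[h1 h2]; rewrite lee_fin /g mulrAC.
  have /andP[fy0 fyw] := f0w y.
  apply: ler_pM => //.
  rewrite /normal_fun -expRD ler_expR subr0 -!mulNr -mulrDl ler_wpM2r ?invr_ge0 ?ltW //.
  move: h2; rewrite -natr1 mulrDl mul1r; lra.
rewrite -(big_mkord (fun=> true) (fun j => \int[@lebesgue_measure R]_(y in bucket δ j) (g y)%:E)%E) /index_iota subn0.
have Htriv : trivIset [set` iota 0 K] (bucket δ).
  move=> i j _ _ [y [hi hj]]; exact: bucket_uniq d0 hi hj.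
have HU := @ge0_integral_bigsetU _ _ _ (@lebesgue_measure R) nat (bucket δ)
  (fun y => (g y)%:E) (iota 0 K) (measurable_bucket δ) (iota_uniq 0 K) Htriv
  (measurable_funTS (proj2 (measurable_EFinP _ _) mg)) (fun y _ => g0 y).
rewrite -HU.
apply: le_trans (ge0_subset_integral _ _ _ _ _ (@subsetT _ _)) _.
- apply: bigsetU_measurable => j _; exact: measurable_bucket.
- by [].
- exact/measurable_EFinP.
- by move=> y _; rewrite lee_fin.
rewrite /g; under eq_integral do rewrite EFinM.
rewrite ge0_integralZl_EFin //; last 3 first.
- by move=> y _; rewrite lee_fin normal_fun_ge0.
- by apply/measurable_EFinP; exact: measurable_normal_fun.
- by rewrite mulr_ge0 ?expR_ge0.
by rewrite normal_fun_integral // -EFinM.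
Qed.


Lemma le_of_delta (a B c : R) : 0 <= B -> 0 < c ->
  (forall δ, 0 < δ -> a <= B * expR (c * δ)) -> a <= B.
Proof.
move=> B0 c0 H; apply/ler_addgt0Pr => e e0.
have [B00|Bn0] := eqVneq B 0.
  rewrite B00 in H *; rewrite add0r; apply: le_trans (H 1 ltr01) _.
  by rewrite mul0r ltW.
have Bp : 0 < B by rewrite lt_neqAle eq_sym Bn0 B0.
have h1 : 1 < 1 + e / B by rewrite ltrDl divr_gt0.
have := H (ln (1 + e / B) / c) (divr_gt0 (ln_gt0 h1) c0).
rewrite [c * _]mulrC divfK ?gt_eqF // lnK; last by rewrite posrE (lt_trans ltr01 h1).
by rewrite mulrDr mulr1 mulrCA divff ?gt_eqF // mulr1.
Qed.

End helpers.

Lemma measurable_sumsq d (T : measurableType d) (R : realType) (P : probability T R)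
  (n : nat) (X : 'I_n -> {RV P >-> R}) (a : R) :
  measurable [set t | \sum_(i < n) (X i t) ^+ 2 <= a].
Proof.
have mS : measurable_fun setT (fun t => \sum_(i < n) X i t ^+ 2).
  by apply: measurable_sum => i; exact: measurable_funX.
have := mS measurableT _ (measurable_itv `]-oo, a]).
rewrite setTI; congr measurable; apply/seteqP; split => t /=;
  by rewrite in_itv.
Qed.

Theorem lemma1 (d : measure_display) (T : measurableType d) (R : realType)
  (P : probability T R) (n : nat) (X : 'I_n -> {RV P >-> R}) (sigma w : R)
  (hsigma : 0 < sigma) (hw : 0 < w)
  (hindep : mutually_independent P (fun i => (X i : T -> R)))
  (hdens : forall i, has_cont_density_bounded_by P (fun t => X i t / sigma) w)
  (x : R) (hx : 0 < x) :
  (P [set t | (\sum_(i < n) (X i t) ^+ 2 <= sigma ^+ 2 * x)%R]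
   <= (expR (n%:R / 2 * (1 + ln (2 * pi * w ^+ 2) - ln (n%:R / x))))%:E)%E.
Proof.
have mE := @measurable_sumsq _ _ _ P n X (sigma ^+ 2 * x).
have [n0|npos] := eqVneq n 0%N.
  have -> : (n%:R : R) = 0 by rewrite n0.
  by rewrite !mul0r expR0; exact: probability_le1.
have n0 : 0 < n%:R :> R by rewrite ltr0n lt0n.
set s := Num.sqrt (x / n%:R).
have s0 : 0 < s by rewrite sqrtr_gt0 divr_gt0.
have s2 : s ^+ 2 = x / n%:R by rewrite sqr_sqrtr // ltW // divr_gt0.
set D := s ^+ 2 *+ 2.
have D0 : 0 < D by rewrite pmulrn_lgt0 // exprn_gt0.
have : forall i, exists f : R -> R,
    continuous f /\ (forall x, 0 <= f x <= w) /\
    forall B : set R, measurable B ->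
      P ((fun t => X i t / sigma) @^-1` B) = (\int[@lebesgue_measure R]_(x in B) (f x)%:E)%E.
  exact: hdens.
move=> /choice [f hf].
set Mb := expR (x / D) * (w / normal_peak s) ^+ n.
have claim : forall δ, 0 < δ ->
  (P [set t | (\sum_(i < n) (X i t) ^+ 2 <= sigma ^+ 2 * x)%R] <=
   (Mb * expR (n%:R / D * δ))%:E)%E.
  move=> δ d0.
  set K := (Num.truncn (x / δ)).+1.
  pose Y (i : 'I_n) (j : nat) : set T := X i @^-1` [set y | bucket δ j (y / sigma)].
  have mY i j : measurable (Y i j).
    apply: (@measurable_bucket_comp _ _ _ (fun t => X i t / sigma)).
    exact: measurable_funM.
  have mYR j : measurable [set y : R | bucket δ j (y / sigma)].
    apply: (@measurable_bucket_comp _ _ _ (fun y : R => y / sigma)).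
    exact: measurable_funM.
  pose B (k : {ffun 'I_n -> 'I_K}) : set T :=
    \bigcap_(i in [set: 'I_n]) (X i @^-1` [set y | bucket δ (k i) (y / sigma)]).
  pose Sk (k : {ffun 'I_n -> 'I_K}) : bool := \sum_(i < n) (k i)%:R * δ <= x.
  pose C (k : {ffun 'I_n -> 'I_K}) : set T := if Sk k then B k else set0.
  have mB k : measurable (B k).
    by apply: fin_bigcap_measurable => // i _; exact: mY.
  have mC k : measurable (C k) by rewrite /C; case: ifP.
  pose p i j := fine (P (Y i j)).
  have Pp i j : P (Y i j) = (p i j)%:E by rewrite fineK // fin_num_measure.
  have p0 i j : 0 <= p i j by rewrite /p fine_ge0.
  have cover : [set t | (\sum_(i < n) (X i t) ^+ 2 <= sigma ^+ 2 * x)%R] `<=`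
      \bigcup_(k in [set: {ffun 'I_n -> 'I_K}]) C k.
    move=> t /= Ht.
    pose y i := X i t / sigma.
    have Hy : \sum_(i < n) y i ^+ 2 <= x.
      rewrite /y; under eq_bigr do rewrite expr_div_n.
      by rewrite -mulr_suml ler_pdivrMr ?exprn_gt0 // mulrC.
    have Hyi i : y i ^+ 2 <= x.
      apply: le_trans Hy; rewrite (bigD1 i) //= lerDl sumr_ge0 // => j _.
      exact: sqr_ge0.
    have Hk i : (Num.truncn (y i ^+ 2 / δ) < K)%N.
      rewrite ltnS le_truncn // ler_wpM2r // invr_ge0 ltW //.
    exists [ffun i => Ordinal (Hk i)] => //.
    have hS : Sk [ffun i => Ordinal (Hk i)].
      apply: le_trans Hy; apply: ler_sum => i _; rewrite ffunE /=.
      have /bucketE /andP[h1 _] := bucket_truncn δ (y i) d0.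
      exact: h1.
    rewrite /C hS => i _; rewrite /= ffunE /=.
    exact: bucket_truncn.
  have tC : trivIset [set: {ffun 'I_n -> 'I_K}] C.
    move=> k1 k2 _ _ [t [h1 h2]].
    rewrite /C in h1 h2.
    case: (Sk k1) h1 => // h1; case: (Sk k2) h2 => // h2.
    apply/ffunP => i; apply/val_inj.
    exact: (bucket_uniq _ _ _ _ d0 (h1 i Logic.I) (h2 i Logic.I)).
  apply: (le_trans (le_measure P (mem_set mE) _ cover)).
    by apply/mem_set; apply: fin_bigcup_measurable; [exact: finite_finset|move=> k _; exact: mC].
  rewrite (measure_fin_bigcup P finite_finset tC (fun k _ => mC k)).
  rewrite (fsbigE (index_enum {ffun 'I_n -> 'I_K})) //; last first.
    by move=> k _; rewrite mem_index_enum.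
    exact: index_enum_uniq.
  under eq_bigl do rewrite in_setT.
  have PC k : P (C k) = (if Sk k then \prod_i p i (k i) else 0)%:E.
    rewrite /C; case: ifP => _; last by rewrite measure0.
    have H := hindep (fun i => [set y | bucket δ (k i) (y / sigma)]) (fun i => mYR (k i)).
    cbv beta in H; rewrite /B H -prodEFin; apply: eq_bigr => i _; exact: Pp.
  rewrite (eq_bigr _ (fun k _ => PC k)).
  rewrite sumEFin lee_fin.
  pose c (j : nat) := expR (- (j%:R * δ) / D).
  have hsum i : \sum_(j < K) c j * p i j <= expR (δ / D) * w / normal_peak s.
    have [cf [fb fP]] := hf i.
    have Ip j : (\int[@lebesgue_measure R]_(y in bucket δ j) (f i y)%:E)%E = (p i j)%:E.
      rewrite -fP; [exact (Pp i j)|exact: measurable_bucket].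
    rewrite -lee_fin -sumEFin.
    under eq_bigr do rewrite EFinM -Ip.
    exact: density_sum.
  apply: (@le_trans _ _ (\sum_(k : {ffun 'I_n -> 'I_K})
      expR (x / D) * \prod_i (c (k i) * p i (k i)))).
    apply: ler_sum => k _.
    case hS: (Sk k); last first.
      by rewrite mulr_ge0 ?expR_ge0 // prodr_ge0 // => i _; rewrite mulr_ge0 ?expR_ge0.
    rewrite big_split /= mulrA; apply: ler_peMl; first by rewrite prodr_ge0.
    rewrite /c -expR_sum -expRD; apply: le_trans (expR_ge1Dx _); rewrite lerDl.
    rewrite -mulr_suml sumrN -mulrDl divr_ge0 ?subr_ge0; [by []|exact: hS|exact: ltW].
  rewrite -mulr_sumr.
  rewrite -(bigA_distr_bigA (fun (i : 'I_n) (j : 'I_K) => c j * p i j)) /=.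
  rewrite /Mb -mulrA ler_wpM2l ?expR_ge0 //.
  have -> : n%:R / D * δ = n%:R * (δ / D) by rewrite mulrAC mulrA.
  rewrite expRM_natl -exprMn.
  have -> : (w / normal_peak s * expR (δ / D)) ^+ n =
      \prod_(i < n) (expR (δ / D) * w / normal_peak s).
    by rewrite prodr_const card_ord mulrC mulrA.
  apply: ler_prod => i _; apply/andP; split; last exact: hsum.
  by rewrite sumr_ge0 // => j _; rewrite mulr_ge0 ?expR_ge0.
have finE := fin_num_measure P _ mE.
rewrite -(fineK finE) lee_fin.
have -> : expR (n%:R / 2 * (1 + ln (2 * pi * w ^+ 2) - ln (n%:R / x))) = Mb.
  rewrite /Mb; set m := w / normal_peak s.
  have m0 : 0 < m by rewrite divr_gt0 // normal_peak_gt0 // gt_eqF.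
  have m2 : m ^+ 2 = 2 * pi * w ^+ 2 * (n%:R / x)^-1.
    rewrite /m /normal_peak invrK exprMn sqr_sqrtr; last first.
      by rewrite mulrn_wge0 // mulr_ge0 ?pi_ge0 // sqr_ge0.
    rewrite s2 invf_div -mulr_natr; field.
    by rewrite gt_eqF.
  have pw : 0 < 2 * pi * w ^+ 2 by rewrite mulr_gt0 ?mulr_gt0 ?pi_gt0 ?exprn_gt0.
  have nx : 0 < n%:R / x by rewrite divr_gt0.
  have lm : ln m = (ln (2 * pi * w ^+ 2) - ln (n%:R / x)) / 2.
    have h := lnXn 2 m0.
    rewrite m2 lnM ?posrE ?invr_gt0 // lnV ?posrE // in h.
    by rewrite h mulr2n; field.
  rewrite -[m]lnK ?posrE // -expRM_natl -expRD lm; congr expR.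
  rewrite /D s2; field.
  by rewrite !gt_eqF.
apply: (@le_of_delta R _ _ (n%:R / D)).
- by rewrite /Mb mulr_ge0 ?expR_ge0 // exprn_ge0 // divr_ge0 ?ltW // normal_peak_gt0 // gt_eqF.
- exact: divr_gt0.
- by move=> δ d0; rewrite -lee_fin fineK //; exact: claim.
Qed.
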